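(* Let $(G,X,\Gamma)$ be a $(\mu,\nu)$-path system group, let $\eta\ge0$, and assume $G$ contains an $\eta$-quasi-convex element $(g,A)$. There exists $\theta=\theta(\eta,g,A)\ge1$ such that for every $\eta$-quasi-convex subgroup $(H,Y)$ of $G$: (I) for every $u\in G$, if $\operatorname{diam}(uA\cap Y)>\theta$ then $uA\subseteq Y^{+\theta}$; (II) for every subgroup $K$ with $H\le K\le G$, if $[K:H]>\theta$ then there exists $k\in K$ with $\operatorname{diam}(kA\cap Y)\le\theta$.
   Context: A path is a rectifiable continuous map $\alpha\colon[a,b]\to X$ parametrised by arc length; it is a $(\kappa,\lambda)$-quasi-geodesic if $d(\alpha(t),\alpha(t'))\le|t-t'|\le\kappa d(\alpha(t),\alpha(t'))+\lambda$. A $(\mu,\nu)$-path system on a geodesic metric space $X$ is a collection $\Gamma$ of paths closed under subpaths, such that any two points are joined by an element of $\Gamma$ and every element is a $(\mu,\nu)$-quasi-geodesic. A $(\mu,\nu)$-path system group $(G,X,\Gamma)$ is a group $G$ acting properly by isometries on a geodesic metric space $X$ (balls $B_G(x,r)=\{g: d(x,gx)\le r\}$ finite) with $\Gamma$ a $G$-invariant $(\mu,\nu)$-path system. $Y^{+\eta}=\{x: d(x,Y)\le\eta\}$. A subset $Y$ is $\eta$-quasi-convex if every $\gamma\in\Gamma$ with endpoints in $Y$ lies in $Y^{+\eta}$. A subgroup $H$ is $\eta$-quasi-convex, written $(H,Y)$, if $Y\subseteq X$ is an $H$-invariant $\eta$-quasi-convex subset on which $H$ acts $\eta$-coboundedly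 (for all $y,y'\in Y$ some $h\in H$ has $d(y,hy')\le\eta$). An element $g\in G$ is $\eta$-quasi-convex, written $(g,A)$, if $g$ has infinite order and $(\langle g\rangle,A)$ is an $\eta$-quasi-convex subgroup. The diameter of the empty set is $0$. *)

(* Defs.v *)
From Stdlib Require Import Reals List ZArith.
From Coquelicot Require Import Coquelicot.
Open Scope R_scope.

Record MetricSpace := {
  pt :> Type;
  dist : pt -> pt -> R;
  dist_nonneg : forall x y, 0 <= dist x y;
  dist_eq0 : forall x y, dist x y = 0 <-> x = y;
  dist_sym : forall x y, dist x y = dist y x;
  dist_tri : forall x y z, dist x z <= dist x y + dist y z
}.

Definition geodesic_space (X : MetricSpace) : Prop :=
  forall x y : X, exists c : R -> X,
    c 0 = x /\ c (dist X x y) = y /\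
    forall s t, 0 <= s <= dist X x y -> 0 <= t <= dist X x y ->
      dist X (c s) (c t) = Rabs (s - t).

Definition dist_set (X : MetricSpace) (x : X) (Y : X -> Prop) : Rbar :=
  Glb_Rbar (fun r => exists y, Y y /\ r = dist X x y).
Definition nbhd (X : MetricSpace) (Y : X -> Prop) (eta : R) : X -> Prop :=
  fun x => Rbar_le (dist_set X x Y) (Finite eta).

Definition diam (X : MetricSpace) (S : X -> Prop) : Rbar :=
  (* 0 is adjoined to the set of distances: harmless since distances are >= 0,
     and it gives diam(empty) = 0 *)
  Lub_Rbar (fun r => r = 0 \/ exists x y, S x /\ S y /\ r = dist X x y).

(* a path is a map alpha : [a,b] -> X, represented by (a, b, alpha : R -> X);
   values of alpha outside [a,b] are irrelevant. *)
Record path (X : MetricSpace) := mkPath {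
  p_a : R; p_b : R; p_f : R -> X
}.
Arguments mkPath {X}.
Arguments p_a {X}.
Arguments p_b {X}.
Arguments p_f {X}.

Fixpoint incr_from (x0 : R) (l : list R) : Prop :=
  match l with nil => True | y :: l' => x0 <= y /\ incr_from y l' end.

Fixpoint chain_len (X : MetricSpace) (f : R -> X) (x0 : R) (l : list R) : R :=
  match l with
  | nil => 0
  | y :: l' => dist X (f x0) (f y) + chain_len X f y l'
  end.

Definition curve_length (X : MetricSpace) (f : R -> X) (s t : R) : Rbar :=
  Lub_Rbar (fun r => exists l, incr_from s l /\ last l s = t /\ r = chain_len X f s l).

Definition is_path (X : MetricSpace) (p : path X) : Prop :=
  p_a p <= p_b p /\
  (forall t, p_a p <= t <= p_b p -> forall eps, 0 < eps -> exists delta, 0 < delta /\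
     forall t', p_a p <= t' <= p_b p -> Rabs (t' - t) < delta ->
       dist X (p_f p t) (p_f p t') < eps) /\
  (forall s t, p_a p <= s -> s <= t -> t <= p_b p ->
     curve_length X (p_f p) s t = Finite (t - s)).

Definition quasi_geodesic (X : MetricSpace) (kappa lambda : R) (p : path X) : Prop :=
  is_path X p /\
  forall t t', p_a p <= t <= p_b p -> p_a p <= t' <= p_b p ->
    dist X (p_f p t) (p_f p t') <= Rabs (t - t') /\
    Rabs (t - t') <= kappa * dist X (p_f p t) (p_f p t') + lambda.

Definition path_system (X : MetricSpace) (mu nu : R) (Gam : path X -> Prop) : Prop :=
  (forall p, Gam p -> is_path X p) /\
  (forall p a' b', Gam p -> p_a p <= a' -> a' <= b' -> b' <= p_b p ->
     Gam (mkPath a' b' (p_f p))) /\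
  (forall x y : X, exists p, Gam p /\ p_f p (p_a p) = x /\ p_f p (p_b p) = y) /\
  (forall p, Gam p -> quasi_geodesic X mu nu p).

Record Group := {
  gcar :> Type;
  gmul : gcar -> gcar -> gcar;
  ginv : gcar -> gcar;
  gone : gcar;
  gmulA : forall x y z, gmul x (gmul y z) = gmul (gmul x y) z;
  gmul1l : forall x, gmul gone x = x;
  gmul1r : forall x, gmul x gone = x;
  gmulVl : forall x, gmul (ginv x) x = gone;
  gmulVr : forall x, gmul x (ginv x) = gone
}.

Fixpoint gpow (G : Group) (g : G) (n : nat) : G :=
  match n with O => gone G | S n' => gmul G g (gpow G g n') end.

Definition zpow (G : Group) (g : G) (z : Z) : G :=
  match z with
  | Z0 => gone G
  | Zpos p => gpow G g (Pos.to_nat p)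
  | Zneg p => ginv G (gpow G g (Pos.to_nat p))
  end.

Definition is_subgroup (G : Group) (H : G -> Prop) : Prop :=
  H (gone G) /\ (forall x y, H x -> H y -> H (gmul G x y)) /\
  (forall x, H x -> H (ginv G x)).

Definition cyclic_subgroup (G : Group) (g : G) : G -> Prop :=
  fun h => exists z : Z, h = zpow G g z.

Definition infinite_order (G : Group) (g : G) : Prop :=
  forall n : nat, (0 < n)%nat -> gpow G g n <> gone G.

(* [K:H] > theta (H <= K): there are more than theta pairwise distinct
   cosets kH, k in K (this includes the case of infinite index). *)
Definition index_gt (G : Group) (K H : G -> Prop) (theta : R) : Prop :=
  exists l : list G, (forall k, In k l -> K k) /\
    INR (length l) > theta /\
    forall i j, (i < length l)%nat -> (j < length l)%nat -> i <> j ->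
      ~ H (gmul G (ginv G (nth i l (gone G))) (nth j l (gone G))).

Definition isometric_action (G : Group) (X : MetricSpace) (act : G -> X -> X) : Prop :=
  (forall x, act (gone G) x = x) /\
  (forall g h x, act (gmul G g h) x = act g (act h x)) /\
  (forall g x y, dist X (act g x) (act g y) = dist X x y).

Definition proper_action (G : Group) (X : MetricSpace) (act : G -> X -> X) : Prop :=
  forall (x : X) (r : R), exists l : list G,
    forall g, dist X x (act g x) <= r -> In g l.

Definition act_path (G : Group) (X : MetricSpace) (act : G -> X -> X) (g : G)
  (p : path X) : path X :=
  mkPath (p_a p) (p_b p) (fun t => act g (p_f p t)).

Definition path_system_group (G : Group) (X : MetricSpace) (act : G -> X -> X)
  (Gam : path X -> Prop) (mu nu : R) : Prop :=
  geodesic_space X /\ isometric_action G X act /\ proper_action G X act /\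
  path_system X mu nu Gam /\
  (forall g p, Gam p -> Gam (act_path G X act g p)).

Definition qc_subset (X : MetricSpace) (Gam : path X -> Prop) (eta : R)
  (Y : X -> Prop) : Prop :=
  forall p, Gam p -> Y (p_f p (p_a p)) -> Y (p_f p (p_b p)) ->
    forall t, p_a p <= t <= p_b p -> nbhd X Y eta (p_f p t).

Definition qc_subgroup (G : Group) (X : MetricSpace) (act : G -> X -> X)
  (Gam : path X -> Prop) (eta : R) (H : G -> Prop) (Y : X -> Prop) : Prop :=
  is_subgroup G H /\
  (forall h y, H h -> Y y -> Y (act h y)) /\
  qc_subset X Gam eta Y /\
  (forall y y', Y y -> Y y' -> exists h, H h /\ dist X y (act h y') <= eta).

Definition qc_element (G : Group) (X : MetricSpace) (act : G -> X -> X)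
  (Gam : path X -> Prop) (eta : R) (g : G) (A : X -> Prop) : Prop :=
  infinite_order G g /\ qc_subgroup G X act Gam eta (cyclic_subgroup G g) A.

Definition translate (G : Group) (X : MetricSpace) (act : G -> X -> X) (u : G)
  (A : X -> Prop) : X -> Prop := fun x => exists a, A a /\ x = act u a.
Definition inter (X : MetricSpace) (A B : X -> Prop) : X -> Prop :=
  fun x => A x /\ B x.

(* Main.v *)
Require Import Defs.
From Stdlib Require Import Reals List ZArith.
From Coquelicot Require Import Coquelicot.
From Stdlib Require Import Lia Lra IndefiniteDescription Classical.
Require Import Defs.
Open Scope R_scope.

Local Open Scope Z_scope.

Lemma g_cancel_l (G : Group) (x y z : G) : gmul G z x = gmul G z y -> x = y.
Proof.
  intro E. rewrite <- (gmul1l G x), <- (gmul1l G y), <- (gmulVl G z), <- !gmulA, E. reflexivity.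
Qed.

Lemma g_cancel_r (G : Group) (x y z : G) : gmul G x z = gmul G y z -> x = y.
Proof.
  intro E. rewrite <- (gmul1r G x), <- (gmul1r G y), <- (gmulVr G z), !gmulA, E. reflexivity.
Qed.

Lemma g_inv_unique (G : Group) (x y : G) : gmul G x y = gone G -> y = ginv G x.
Proof.
  intro E. apply (g_cancel_l G _ _ x). rewrite E, gmulVr. reflexivity.
Qed.

Lemma g_inv_inv (G : Group) (x : G) : ginv G (ginv G x) = x.
Proof. symmetry. apply g_inv_unique. apply gmulVl. Qed.

Lemma g_inv_mul (G : Group) (x y : G) :
  ginv G (gmul G x y) = gmul G (ginv G y) (ginv G x).
Proof.
  symmetry. apply g_inv_unique.
  rewrite gmulA, <- (gmulA G x y), gmulVr, gmul1r, gmulVr. reflexivity.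
Qed.

Lemma g_inv_one (G : Group) : ginv G (gone G) = gone G.
Proof. symmetry. apply g_inv_unique. apply gmul1l. Qed.

Lemma gpow_comm (G : Group) (g : G) n : gmul G g (gpow G g n) = gmul G (gpow G g n) g.
Proof.
  induction n; simpl. rewrite gmul1l, gmul1r; reflexivity.
  rewrite IHn at 1. rewrite gmulA. reflexivity.
Qed.

Lemma zpow_eq (G : Group) (g : G) z : zpow G g z =
  if Z.leb 0 z then gpow G g (Z.to_nat z) else ginv G (gpow G g (Z.to_nat (- z))).
Proof. destruct z; reflexivity. Qed.

Lemma zpow_succ_r (G : Group) (g : G) z :
  zpow G g (z + 1) = gmul G (zpow G g z) g.
Proof.
  rewrite !zpow_eq. destruct (Z.leb_spec 0 z).
  - destruct (Z.leb_spec 0 (z+1)); [|lia].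
    replace (Z.to_nat (z+1)) with (S (Z.to_nat z)) by lia. simpl. apply gpow_comm.
  - destruct (Z.leb_spec 0 (z+1)).
    + replace (Z.to_nat (z+1)) with O by lia. replace (Z.to_nat (-z)) with 1%nat by lia.
      simpl. rewrite gmul1r, gmulVl. reflexivity.
    + replace (Z.to_nat (-z)) with (S (Z.to_nat (-(z+1)))) by lia. simpl.
      rewrite g_inv_mul, <- gmulA, gmulVl, gmul1r. reflexivity.
Qed.

Lemma zpow_pred_r (G : Group) (g : G) z :
  zpow G g (z - 1) = gmul G (zpow G g z) (ginv G g).
Proof.
  replace z with ((z - 1) + 1) at 2 by lia. rewrite zpow_succ_r.
  rewrite <- gmulA, gmulVr, gmul1r. reflexivity.
Qed.

Lemma zpow_add (G : Group) (g : G) i j :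
  zpow G g (i + j) = gmul G (zpow G g i) (zpow G g j).
Proof.
  assert (P : forall n : nat, forall i, zpow G g (i + Z.of_nat n) = gmul G (zpow G g i) (zpow G g (Z.of_nat n))
     /\ zpow G g (i - Z.of_nat n) = gmul G (zpow G g i) (zpow G g (- Z.of_nat n))).
  { induction n; intro i0.
    - simpl. rewrite Z.add_0_r, Z.sub_0_r, gmul1r. split; reflexivity.
    - destruct (IHn i0) as [A1 A2]. split.
      + replace (i0 + Z.of_nat (S n))%Z with ((i0 + Z.of_nat n) + 1)%Z by lia.
        replace (Z.of_nat (S n)) with (Z.of_nat n + 1)%Z by lia.
        rewrite !zpow_succ_r, A1, gmulA. reflexivity.
      + replace (i0 - Z.of_nat (S n))%Z with ((i0 - Z.of_nat n) - 1)%Z by lia.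
        replace (- Z.of_nat (S n))%Z with (- Z.of_nat n - 1)%Z by lia.
        rewrite !zpow_pred_r, A2, gmulA. reflexivity. }
  destruct (Z.le_gt_cases 0 j).
  - replace j with (Z.of_nat (Z.to_nat j)) by lia. apply P.
  - replace (i + j)%Z with (i - Z.of_nat (Z.to_nat (- j)))%Z by lia.
    replace j with (- Z.of_nat (Z.to_nat (- j)))%Z at 2 by lia. apply P.
Qed.

Lemma zpow_0 (G : Group) (g : G) : zpow G g 0 = gone G.
Proof. reflexivity. Qed.

Lemma zpow_opp (G : Group) (g : G) z : zpow G g (- z) = ginv G (zpow G g z).
Proof.
  apply g_inv_unique. rewrite <- zpow_add. replace (z + - z)%Z with 0%Z by lia. reflexivity.
Qed.

Lemma zpow_inj (G : Group) (g : G) : infinite_order G g ->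
  forall i j, zpow G g i = zpow G g j -> i = j.
Proof.
  intros Hinf i j E.
  assert (E2 : zpow G g (i - j) = gone G).
  { replace (i - j)%Z with (i + - j)%Z by lia. rewrite zpow_add, zpow_opp, E, gmulVr. reflexivity. }
  destruct (Z.lt_trichotomy (i - j) 0) as [Hl|[He|Hg]]; [| lia |].
  - exfalso. rewrite zpow_eq in E2. destruct (Z.leb_spec 0 (i-j)); [lia|].
    apply (Hinf (Z.to_nat (- (i - j)))). lia.
    rewrite <- (g_inv_inv G (gpow _ _ _)), E2, g_inv_one. reflexivity.
  - exfalso. rewrite zpow_eq in E2. destruct (Z.leb_spec 0 (i-j)); [|lia].
    apply (Hinf (Z.to_nat (i - j))). lia. exact E2.
Qed.
Local Open Scope R_scope.

Lemma act_inv_l (G : Group) (X : MetricSpace) act : isometric_action G X act ->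
  forall u x, act (ginv G u) (act u x) = x.
Proof. intros [H1 [H2 H3]] u x. rewrite <- H2, gmulVl, H1. reflexivity. Qed.

Lemma act_inv_r (G : Group) (X : MetricSpace) act : isometric_action G X act ->
  forall u x, act u (act (ginv G u) x) = x.
Proof. intros [H1 [H2 H3]] u x. rewrite <- H2, gmulVr, H1. reflexivity. Qed.

Lemma act_mul (G : Group) (X : MetricSpace) act : isometric_action G X act ->
  forall u v x, act (gmul G u v) x = act u (act v x).
Proof. intros [H1 [H2 H3]]. apply H2. Qed.

Lemma act_dist (G : Group) (X : MetricSpace) act : isometric_action G X act ->
  forall u x y, dist X (act u x) (act u y) = dist X x y.
Proof. intros [H1 [H2 H3]]. apply H3. Qed.

Lemma dist_gpow (G : Group) (X : MetricSpace) act (g : G) a0 : isometric_action G X act ->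
  forall n, dist X a0 (act (gpow G g n) a0) <= INR n * dist X a0 (act g a0).
Proof.
  intros IA n. induction n.
  - simpl. rewrite (proj1 IA). rewrite (proj2 (dist_eq0 X a0 a0) eq_refl). lra.
  - simpl gpow. rewrite act_mul by exact IA. rewrite S_INR.
    eapply Rle_trans. apply (dist_tri X _ (act g a0)).
    rewrite act_dist by exact IA. lra.
Qed.

Lemma dist_zpow (G : Group) (X : MetricSpace) act (g : G) a0 : isometric_action G X act ->
  forall k, dist X a0 (act (zpow G g k) a0) <= IZR (Z.abs k) * dist X a0 (act g a0).
Proof.
  intros IA k. rewrite zpow_eq. destruct (Z.leb_spec 0 k).
  - replace (IZR (Z.abs k)) with (INR (Z.to_nat k)). apply dist_gpow; auto.
    rewrite INR_IZR_INZ. f_equal. lia.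
  - replace (IZR (Z.abs k)) with (INR (Z.to_nat (-k))).
    2:{ rewrite INR_IZR_INZ. f_equal. lia. }
    rewrite <- (act_dist G X act IA (gpow G g (Z.to_nat (- k)))), act_inv_r by exact IA.
    rewrite dist_sym. apply dist_gpow; auto.
Qed.

Lemma dist_zpow2 (G : Group) (X : MetricSpace) act (g : G) a0 u : isometric_action G X act ->
  forall i j, dist X (act u (act (zpow G g i) a0)) (act u (act (zpow G g j) a0))
    = dist X a0 (act (zpow G g (j - i)) a0).
Proof.
  intros IA i j. rewrite act_dist by exact IA.
  replace j with (i + (j - i))%Z at 1 by lia.
  rewrite zpow_add, act_mul, act_dist by exact IA. reflexivity.
Qed.

Lemma pigeon {T : Type} (f : nat -> T) (L : list T) n :
  (forall i, (i < n)%nat -> In (f i) L) -> (length L < n)%nat ->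
  exists i j, (i < j < n)%nat /\ f i = f j.
Proof.
  intros Hin Hlen. apply NNPP. intro Hno.
  assert (ND : NoDup (map f (seq 0 n))).
  { apply NoDup_map_NoDup_ForallPairs; [|apply seq_NoDup].
    intros a b Ha Hb E. apply in_seq in Ha, Hb.
    destruct (Nat.lt_trichotomy a b) as [h|[h|h]]; auto; exfalso; apply Hno.
    - exists a, b. split; [lia | exact E].
    - exists b, a. split; [lia | auto]. }
  assert (Inc : incl (map f (seq 0 n)) L).
  { intros x Hx. apply in_map_iff in Hx. destruct Hx as [i [<- Hi]].
    apply in_seq in Hi. apply Hin. lia. }
  pose proof (NoDup_incl_length ND Inc). rewrite length_map, length_seq in H. lia.
Qed.

Lemma divt (f : nat -> Z) (M : Z) K : (0 <= M)%Z ->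
  (forall i, (i < K)%nat -> (Z.abs (f (S i) - f i) <= M)%Z) ->
  forall j, (Z.min (f O) (f K) <= j <= Z.max (f O) (f K))%Z ->
  exists i, (i <= K)%nat /\ (Z.abs (f i - j) <= M)%Z.
Proof.
  intros HM Hs j. induction K; intro Hj.
  - exists O. split. lia. lia.
  - destruct (classic ((Z.min (f O) (f K) <= j <= Z.max (f O) (f K))%Z)) as [Hc|Hc].
    + destruct IHK as [i [Hi Hi2]]. intros; apply Hs; lia. exact Hc. exists i. split; [lia|exact Hi2].
    + exists (S K). split. lia. specialize (Hs K (Nat.lt_succ_diag_r K)). lia.
Qed.

Lemma pow_bound (G : Group) (X : MetricSpace) act (g : G) a0 :
  proper_action G X act -> infinite_order G g ->
  forall r, exists M : Z, (0 <= M)%Z /\ forall k, dist X a0 (act (zpow G g k) a0) <= r -> (Z.abs k <= M)%Z.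
Proof.
  intros PA Hinf r. destruct (PA a0 r) as [L HL].
  apply NNPP. intro Hno.
  assert (Big : forall M, exists k, dist X a0 (act (zpow G g k) a0) <= r /\ (M < Z.abs k)%Z).
  { intro M. apply NNPP. intro Hk. apply Hno. exists (Z.max M 0). split. lia.
    intros k Hd. destruct (Z.le_gt_cases (Z.abs k) M). lia. exfalso. apply Hk. exists k. auto. }
  assert (Lists : forall n, exists ks : list Z, length ks = n /\ NoDup ks /\
     forall k, In k ks -> dist X a0 (act (zpow G g k) a0) <= r).
  { induction n.
    - exists nil. split. reflexivity. split. constructor. intros k [].
    - destruct IHn as [ks [H1 [H2 H3]]].
      destruct (Big (fold_right (fun k s => Z.abs k + s) 0 ks)%Z) as [k [Hk1 Hk2]].
      exists (k :: ks). split. simpl; congruence. split.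
      + constructor; auto. intro Hin.
        assert (forall l, In k l -> (Z.abs k <= fold_right (fun k s => Z.abs k + s) 0 l)%Z).
        { intro l0. induction l0 as [|a l0 IHl0]; simpl. intros []. intros [E|E]. subst.
          assert (0 <= fold_right (fun k s => Z.abs k + s) 0 l0)%Z.
          { clear. induction l0; simpl; lia. } lia.
          specialize (IHl0 E). lia. }
        specialize (H ks Hin). lia.
      + intros k0 [E|E]. subst; auto. auto. }
  destruct (Lists (S (length L))) as [ks [H1 [H2 H3]]].
  assert (ND : NoDup (map (zpow G g) ks)).
  { apply NoDup_map_NoDup_ForallPairs; auto. intros a b _ _. apply zpow_inj; auto. }
  assert (Inc : incl (map (zpow G g) ks) L).
  { intros x Hx. apply in_map_iff in Hx. destruct Hx as [k [<- Hk]]. apply HL. auto. }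
  pose proof (NoDup_incl_length ND Inc). rewrite length_map in H. lia.
Qed.

Definition near (X : MetricSpace) (Y : X -> Prop) (e : R) (x : X) : Prop :=
  exists y, Y y /\ dist X x y <= e.

Lemma near_nbhd X Y e x : near X Y e x -> nbhd X Y e x.
Proof.
  intros [y [Hy Hd]]. unfold nbhd, dist_set.
  destruct (Glb_Rbar_correct (fun r => exists y, Y y /\ r = dist X x y)) as [H1 H2].
  eapply Rbar_le_trans. apply H1. exists y. split; eauto. simpl. exact Hd.
Qed.

Lemma nbhd_near X Y e x : nbhd X Y e x -> near X Y (e + 1) x.
Proof.
  intro Hn. apply NNPP. intro Hno. unfold nbhd, dist_set in Hn.
  destruct (Glb_Rbar_correct (fun r => exists y, Y y /\ r = dist X x y)) as [H1 H2].
  assert (Hlb : is_lb_Rbar (fun r => exists y, Y y /\ r = dist X x y) (Finite (e + 1))).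
  { intros r [y [Hy ->]]. simpl. destruct (Rle_lt_dec (e+1) (dist X x y)) as [h|h]. exact h.
    exfalso. apply Hno. exists y. split; auto. lra. }
  specialize (H2 _ Hlb).
  pose proof (Rbar_le_trans _ _ _ H2 Hn). simpl in H. lra.
Qed.

Lemma near_mono X Y e e' x : e <= e' -> near X Y e x -> near X Y e' x.
Proof. intros h [y [Hy Hd]]. exists y. split; auto. lra. Qed.

Lemma diam_gt X S th : 0 <= th -> Rbar_lt (Finite th) (diam X S) ->
  exists x y, S x /\ S y /\ th < dist X x y.
Proof.
  intros h0 Hlt. apply NNPP. intro Hno. unfold diam in Hlt.
  destruct (Lub_Rbar_correct (fun r => r = 0 \/ exists x y, S x /\ S y /\ r = dist X x y)) as [H1 H2].
  assert (Hub : is_ub_Rbar (fun r => r = 0 \/ exists x y, S x /\ S y /\ r = dist X x y) (Finite th)).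
  { intros r [->|[x [y [Hx [Hy ->]]]]]; simpl. exact h0.
    destruct (Rle_lt_dec (dist X x y) th) as [h|h]. exact h. exfalso. apply Hno. exists x, y. auto. }
  specialize (H2 _ Hub). apply (Rbar_lt_not_le _ _ Hlt). exact H2.
Qed.

Lemma g_swap (G : Group) (a b c d : G) :
  gmul G (ginv G a) b = gmul G (ginv G c) d -> gmul G d (ginv G b) = gmul G c (ginv G a).
Proof.
  intro E.
  assert (Ed : d = gmul G c (gmul G (ginv G a) b)).
  { rewrite E, gmulA, gmulVr, gmul1l. reflexivity. }
  rewrite Ed, <- !gmulA, gmulVr, gmul1r. reflexivity.
Qed.

Lemma z_all (Sq : Z -> Prop) (p m : Z) : (0 < p)%Z ->
  (forall q, Sq q -> Sq (q + p)%Z) -> (forall q, Sq (q + p)%Z -> Sq q) ->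
  (forall r, (0 <= r < p)%Z -> Sq (m + r)%Z) -> forall q, Sq q.
Proof.
  intros hp Hup Hdn Hb.
  assert (Hn : forall n : nat, forall q, Sq q -> Sq (q + Z.of_nat n * p)%Z /\ Sq (q - Z.of_nat n * p)%Z).
  { induction n; intros q Hq.
    - simpl. rewrite Z.add_0_r, Z.sub_0_r. auto.
    - destruct (IHn q Hq) as [A1 A2]. split.
      + replace (q + Z.of_nat (S n) * p)%Z with ((q + Z.of_nat n * p) + p)%Z by lia. auto.
      + apply Hdn. replace (q - Z.of_nat (S n) * p + p)%Z with (q - Z.of_nat n * p)%Z by lia. auto. }
  intro q.
  pose proof (Z.div_mod (q - m) p ltac:(lia)).
  pose proof (Z.mod_pos_bound (q - m) p hp).
  set (r := ((q - m) mod p)%Z) in *. set (d := ((q - m) / p)%Z) in *.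
  assert (Hr : Sq (m + r)%Z) by (apply Hb; lia).
  destruct (Z.le_gt_cases 0 d).
  - replace q with ((m + r) + Z.of_nat (Z.to_nat d) * p)%Z by lia. apply Hn; auto.
  - replace q with ((m + r) - Z.of_nat (Z.to_nat (- d)) * p)%Z by lia. apply Hn; auto.
Qed.

Lemma core (G : Group) (X : MetricSpace) (act : G -> X -> X)
  (Gam : path X -> Prop) (mu nu eta : R) (g : G) (A : X -> Prop) (a0 : X) :
  path_system_group G X act Gam mu nu -> 0 <= eta -> qc_element G X act Gam eta g A -> A a0 ->
  forall (M0 : Z), (0 <= M0)%Z ->
  (forall k, dist X a0 (act (zpow G g k) a0) <= 2 * (2 * eta + 1) + 1 -> (Z.abs k <= M0)%Z) ->
  forall (D1 c : R), D1 = dist X a0 (act g a0) -> c = IZR M0 * D1 + (2 * eta + 1) + (eta + 1) ->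
  forall L2 : list G, (forall h, dist X a0 (act h a0) <= 2 * c + eta -> In h L2) ->
  forall H Y, qc_subgroup G X act Gam eta H Y ->
  forall u x x', translate G X act u A x -> Y x -> translate G X act u A x' -> Y x' ->
  dist X x x' > 2 * (2 * eta + 1) + INR (length L2) * D1 ->
  forall z, translate G X act u A z -> near X Y (c + eta) z.
Proof.
  intros PSG Heta QE HA0 M0 HM0 HM0b D1 c HD1 Hc L2 HL2 H Y QH u x x' Tx Yx Tx' Yx' Hxx' z Hz.
  destruct PSG as [GS [IA [PA [PS INV]]]].
  destruct PS as [Pis [Psub [Pjoin Pqg]]].
  destruct QE as [Hinf [HAsub [HAinv [HAqc HAcob]]]].
  destruct QH as [HS [HYinv [HYqc HYcob]]].
  set (N := length L2) in *.
  set (e0 := 2 * eta + 1).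
  assert (HD1pos : 0 <= D1) by (rewrite HD1; apply dist_nonneg).
  set (Sq := fun q : Z => near X Y c (act u (act (zpow G g q) a0))).
  destruct (Pjoin x x') as [p [Hp [Hpa Hpb]]].
  set (a := p_a p) in *. set (b := p_b p) in *.
  assert (Hab : a <= b) by (apply (Pis p Hp)).
  destruct (archimed (b - a)) as [Hup _].
  set (K := Z.to_nat (up (b - a))).
  assert (HK : b - a <= INR K).
  { unfold K. rewrite INR_IZR_INZ. rewrite Z2Nat.id. lra.
    apply le_IZR. lra. }
  set (t := fun i : nat => Rmin (a + INR i) b).
  assert (Ht : forall i, a <= t i <= b).
  { intro i. unfold t. pose proof (pos_INR i). unfold Rmin. destruct (Rle_dec (a + INR i) b); lra. }
  assert (Ht0 : t O = a). { unfold t. simpl. rewrite Rplus_0_r. apply Rmin_left. lra. }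
  assert (HtK : t K = b). { unfold t. apply Rmin_right. lra. }
  assert (HtS : forall i, Rabs (t i - t (S i)) <= 1).
  { intro i. unfold t. rewrite S_INR. pose proof (pos_INR i). unfold Rmin.
    destruct (Rle_dec (a + INR i) b); destruct (Rle_dec (a + (INR i + 1)) b);
      apply Rabs_le; lra. }
  set (zz := fun i => p_f p (t i)).
  assert (HzY : forall i, near X Y (eta + 1) (zz i)).
  { intro i. apply nbhd_near. apply (HYqc p Hp); [fold a; rewrite Hpa; exact Yx | fold b; rewrite Hpb; exact Yx' | apply Ht]. }
  destruct Tx as [ax [Hax Ex]]. destruct Tx' as [ax' [Hax' Ex']].
  assert (Hk : forall i, exists k, dist X (zz i) (act u (act (zpow G g k) a0)) <= e0).
  { intro i.
    set (q := act_path G X act (ginv G u) p).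
    assert (Hq : Gam q) by (apply INV; exact Hp).
    assert (Hn : nbhd X A eta (act (ginv G u) (zz i))).
    { apply (HAqc q Hq).
      - unfold q, act_path; simpl. fold a. rewrite Hpa, Ex, act_inv_l by exact IA. exact Hax.
      - unfold q, act_path; simpl. fold b. rewrite Hpb, Ex', act_inv_l by exact IA. exact Hax'.
      - unfold q, act_path; simpl. apply Ht. }
    destruct (nbhd_near _ _ _ _ Hn) as [a' [Ha' Hd']].
    destruct (HAcob a' a0 Ha' HA0) as [h [[k ->] Hdk]].
    exists k. eapply Rle_trans. apply (dist_tri X _ (act u a')).
    rewrite <- (act_inv_r G X act IA u (zz i)) at 1. rewrite !act_dist by exact IA.
    unfold e0. lra. }
  destruct (functional_choice _ Hk) as [kf Hkf].
  assert (Hcons : forall i, (Z.abs (kf (S i) - kf i) <= M0)%Z).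
  { intro i. apply HM0b. rewrite <- (dist_zpow2 G X act g a0 u IA).
    eapply Rle_trans. apply (dist_tri X _ (zz i)). rewrite dist_sym.
    eapply Rle_trans. apply Rplus_le_compat_l. apply (dist_tri X _ (zz (S i))).
    assert (dist X (zz i) (zz (S i)) <= 1).
    { eapply Rle_trans. apply (proj1 (proj2 (Pqg p Hp) (t i) (t (S i)) (Ht i) (Ht (S i)))). apply HtS. }
    pose proof (Hkf i). pose proof (Hkf (S i)). fold e0. lra. }
  assert (Hz0 : zz O = x). { unfold zz. rewrite Ht0. exact Hpa. }
  assert (HzK : zz K = x'). { unfold zz. rewrite HtK. exact Hpb. }
  assert (HB : (Z.of_nat N < Z.abs (kf K - kf O))%Z).
  { assert (Hd : dist X x x' <= 2 * e0 + IZR (Z.abs (kf K - kf O)) * D1).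
    { rewrite <- Hz0, <- HzK.
      eapply Rle_trans. apply (dist_tri X _ (act u (act (zpow G g (kf O)) a0))).
      eapply Rle_trans. apply Rplus_le_compat_l. apply (dist_tri X _ (act u (act (zpow G g (kf K)) a0))).
      rewrite dist_zpow2 by exact IA. rewrite HD1.
      pose proof (dist_zpow G X act g a0 IA (kf K - kf O)).
      pose proof (Hkf O). pose proof (Hkf K). rewrite dist_sym in H2. rewrite <- HD1 in *. lra. }
    apply lt_IZR. rewrite <- INR_IZR_INZ.
    destruct (Rle_lt_dec (IZR (Z.abs (kf K - kf O))) (INR N)) as [h|h]; auto.
    exfalso. pose proof (Rmult_le_compat_r D1 _ _ HD1pos h). fold e0 in Hxx'. lra. }
  assert (HC : forall j, (Z.min (kf O) (kf K) <= j <= Z.max (kf O) (kf K))%Z -> Sq j).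
  { intros j Hj. destruct (divt kf M0 K HM0 (fun i _ => Hcons i) j Hj) as [i [_ Hi]].
    destruct (HzY i) as [y [Hy Hdy]]. exists y. split; auto.
    eapply Rle_trans. apply (dist_tri X _ (act u (act (zpow G g (kf i)) a0))).
    eapply Rle_trans. apply Rplus_le_compat_l. apply (dist_tri X _ (zz i)).
    rewrite dist_zpow2 by exact IA.
    pose proof (dist_zpow G X act g a0 IA (kf i - j)). pose proof (Hkf i). rewrite dist_sym in H1.
    rewrite <- HD1 in H0.
    assert (IZR (Z.abs (kf i - j)) * D1 <= IZR M0 * D1).
    { apply Rmult_le_compat_r; auto. apply IZR_le. exact Hi. }
    rewrite Hc. fold e0. lra. }
  set (m := Z.min (kf O) (kf K)).
  assert (Hh : forall i : nat, exists h, (i < S N)%nat -> H h /\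
     dist X (act u (act (zpow G g (m + Z.of_nat i)) a0)) (act h (act u (act (zpow G g m) a0))) <= 2 * c + eta).
  { intro i. destruct (Nat.lt_ge_cases i (S N)) as [hi|hi].
    2:{ exists (gone G). intro; lia. }
    destruct (HC (m + Z.of_nat i)%Z) as [yi [Hyi Hdi]]. unfold m; lia.
    destruct (HC m) as [ym [Hym Hdm]]. unfold m; lia.
    destruct (HYcob yi ym Hyi Hym) as [h [Hh Hdh]].
    exists h. intros _. split; auto.
    eapply Rle_trans. apply (dist_tri X _ yi).
    eapply Rle_trans. apply Rplus_le_compat_l. apply (dist_tri X _ (act h ym)).
    rewrite act_dist by exact IA. rewrite (dist_sym X ym). lra. }
  destruct (functional_choice _ Hh) as [hf Hhf].
  set (V := fun i : nat => gmul G u (zpow G g (m + Z.of_nat i))).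
  set (W := gmul G u (zpow G g m)).
  set (gam := fun i : nat => gmul G (gmul G (ginv G (V i)) (hf i)) W).
  destruct (pigeon gam L2 (S N)) as [i [j [Hij Eij]]].
  { intros i hi. apply HL2. unfold gam.
    rewrite !act_mul by exact IA.
    rewrite <- (act_dist G X act IA (V i)), act_inv_r by exact IA.
    unfold V, W. rewrite !act_mul by exact IA. apply (Hhf i hi). }
  { fold N. lia. }
  unfold gam in Eij. apply g_cancel_r in Eij. apply g_swap in Eij.
  set (w := gmul G (hf j) (ginv G (hf i))) in *.
  assert (Hw : H w).
  { destruct HS as [_ [Hm Hi]]. apply Hm. apply (Hhf j); lia. apply Hi. apply (Hhf i); lia. }
  set (P := Z.of_nat (j - i)).
  assert (Hwact : forall q, act w (act u (act (zpow G g q) a0)) = act u (act (zpow G g (q + P)) a0)).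
  { intro q. rewrite Eij. unfold V. rewrite g_inv_mul, !act_mul by exact IA.
    rewrite act_inv_l by exact IA. rewrite <- zpow_opp. f_equal.
    rewrite <- (act_mul G X act IA (zpow G g _) (zpow G g q)), <- zpow_add.
    rewrite <- (act_mul G X act IA), <- zpow_add. f_equal. f_equal. unfold P. lia. }

  assert (Hall : forall q, Sq q).
  { apply (z_all Sq P m). unfold P; lia.
    - intros q [y [Hy Hd]]. exists (act w y). split. apply HYinv; auto.
      rewrite <- Hwact, act_dist by exact IA. exact Hd.
    - intros q [y [Hy Hd]]. exists (act (ginv G w) y). split. apply HYinv; auto. apply (proj2 (proj2 HS)); auto.
      rewrite <- (act_inv_l G X act IA w (act u (act (zpow G g q) a0))).
      rewrite Hwact, act_dist by exact IA. exact Hd.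
    - intros r hr. apply HC. unfold P in hr. lia. }
  destruct Hz as [az [Haz ->]].
  destruct (HAcob az a0 Haz HA0) as [h [[k ->] Hdk]].
  destruct (Hall k) as [y [Hy Hd]]. exists y. split; auto.
  eapply Rle_trans. apply (dist_tri X _ (act u (act (zpow G g k) a0))).
  rewrite act_dist by exact IA. lra.
Qed.

Theorem mainTheorem12 (G : Group) (X : MetricSpace) (act : G -> X -> X)
  (Gam : path X -> Prop) (mu nu eta : R) (g : G) (A : X -> Prop) :
  path_system_group G X act Gam mu nu ->
  0 <= eta ->
  qc_element G X act Gam eta g A ->
  exists theta : R, 1 <= theta /\
    forall (H : G -> Prop) (Y : X -> Prop),
      qc_subgroup G X act Gam eta H Y ->
      (forall u : G,
         Rbar_lt (Finite theta) (diam X (inter X (translate G X act u A) Y)) ->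
         forall x, translate G X act u A x -> nbhd X Y theta x) /\
      (forall K : G -> Prop, is_subgroup G K ->
         (forall h, H h -> K h) ->
         index_gt G K H theta ->
         exists k, K k /\
           Rbar_le (diam X (inter X (translate G X act k A) Y)) (Finite theta)).
Proof.
  intros PSG Heta QE.
  destruct (classic (exists a0, A a0)) as [[a0 HA0] | HnA].
  2:{ exists 1. split. lra. intros H Y QH. split.
      - intros u Hlt. exfalso. destruct (diam_gt _ _ _ Rle_0_1 Hlt) as [x [y [[[a [Ha _]] _] _]]].
        apply HnA. eauto.
      - intros K HK _ _. exists (gone G). split. apply HK.
        apply Rbar_not_lt_le. intro Hlt. destruct (diam_gt _ _ _ Rle_0_1 Hlt) as [x [y [[[a [Ha _]] _] _]]].
        apply HnA. eauto. }
  pose proof PSG as [GS [IA [PA [PS INV]]]].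
  pose proof QE as [Hinf _].
  destruct (pow_bound G X act g a0 PA Hinf (2 * (2 * eta + 1) + 1)) as [M0 [HM0 HM0b]].
  set (D1 := dist X a0 (act g a0)).
  set (c := IZR M0 * D1 + (2 * eta + 1) + (eta + 1)).
  assert (HD1 : 0 <= D1) by apply dist_nonneg.
  assert (Hc : 0 <= c).
  { unfold c. assert (0 <= IZR M0) by (apply IZR_le; lia).
    pose proof (Rmult_le_pos _ _ H HD1). lra. }
  destruct (PA a0 (2 * c + eta)) as [L2 HL2].
  destruct (PA a0 (2 * (c + eta) + eta)) as [L3 HL3].
  pose proof (pos_INR (length L2)) as P2. pose proof (pos_INR (length L3)) as P3.
  pose proof (Rmult_le_pos _ _ P2 HD1) as P2'.
  set (th0 := 2 * (2 * eta + 1) + INR (length L2) * D1).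
  exists (1 + (c + eta) + th0 + INR (length L3)).
  split. unfold th0; lra.
  intros H Y QH.
  pose proof (core G X act Gam mu nu eta g A a0 PSG Heta QE HA0 M0 HM0 HM0b D1 c eq_refl eq_refl
     L2 HL2 H Y QH) as Hcore.
  assert (Hall : forall u, Rbar_lt (Finite (1 + (c + eta) + th0 + INR (length L3)))
              (diam X (inter X (translate G X act u A) Y)) ->
         forall x, translate G X act u A x -> near X Y (c + eta) x).
  { assert (Hth : 0 <= 1 + (c + eta) + th0 + INR (length L3)) by (unfold th0; lra).
    intros u Hlt. destruct (diam_gt _ _ _ Hth Hlt) as [x1 [x2 [[T1 Y1] [[T2 Y2] Hd]]]].
    apply (Hcore u x1 x2 T1 Y1 T2 Y2). unfold th0 in *; lra. }
  split.
  - intros u Hlt x Hx. apply near_nbhd. eapply near_mono; [| apply (Hall u Hlt x Hx)]. unfold th0; lra.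
  - intros K HK HHK [l [Hl [Hlen Hdist]]]. apply NNPP. intro Hno.
    assert (HallK : forall k, K k -> forall z, translate G X act k A z -> near X Y (c + eta) z).
    { intros k Hk. apply Hall. apply Rbar_not_le_lt. intro Hle. apply Hno. exists k. auto. }
    destruct QH as [HS [HYinv [HYqc HYcob]]].
    destruct HK as [HK1 [HKm HKi]].
    destruct (HallK (gone G) HK1 a0) as [y0 [Hy0 Hdy0]].
    { exists a0. split; auto. rewrite (proj1 IA). reflexivity. }
    assert (Hh : forall i : nat, exists h, (i < length l)%nat -> H h /\
       dist X (act (ginv G (nth i l (gone G))) a0) (act h a0) <= 2 * (c + eta) + eta).
    { intro i. destruct (Nat.lt_ge_cases i (length l)) as [hi|hi].
      2:{ exists (gone G). intro; lia. }
      assert (Hk : K (ginv G (nth i l (gone G)))) by (apply HKi, Hl, nth_In; exact hi).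
      destruct (HallK _ Hk (act (ginv G (nth i l (gone G))) a0)) as [yi [Hyi Hdyi]].
      { exists a0. auto. }
      destruct (HYcob yi y0 Hyi Hy0) as [h [Hh Hdh]].
      exists h. intros _. split; auto.
      eapply Rle_trans. apply (dist_tri X _ yi).
      eapply Rle_trans. apply Rplus_le_compat_l. apply (dist_tri X _ (act h y0)).
      rewrite act_dist by exact IA. rewrite (dist_sym X y0). lra. }
    destruct (functional_choice _ Hh) as [hf Hhf].
    set (gam := fun i : nat => gmul G (ginv G (hf i)) (ginv G (nth i l (gone G)))).
    destruct (pigeon gam L3 (length l)) as [i [j [Hij Eij]]].
    { intros i hi. apply HL3. unfold gam.
      rewrite <- (act_dist G X act IA (hf i)), act_mul, act_inv_r by exact IA.
      rewrite dist_sym. apply (Hhf i hi). }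
    { apply INR_lt. unfold th0 in *. lra. }
    unfold gam in Eij. apply g_swap in Eij. rewrite g_inv_inv in Eij.
    apply (Hdist j i); try lia. rewrite Eij.
    destruct HS as [_ [Hm Hi]]. apply Hm. apply (Hhf j); lia. apply Hi. apply (Hhf i); lia.
Qed.
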